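(* Let $\lambda,\lambda'\in\mathbb{N}_0^N$ be partitions and $T,T'\in\mathcal{Y}(\tau)$ such that $\lfloor\lambda,T\rfloor$ and $\lfloor\lambda',T'\rfloor$ are column-strict and $\lfloor\lambda,T\rfloor\ne\lfloor\lambda',T'\rfloor$. Let $T_S$, resp. $T'_S$, be the sink tableaux built from $\lfloor\lambda,T\rfloor$, resp. $\lfloor\lambda',T'\rfloor$. Then $\langle J_{\lambda,T_S},J_{\lambda',T'_S}\rangle_{\mathbb{T}}=0$.
   Context: Notation. $\mathcal{S}_N$ acts on $x\in\mathbb{C}^N$ by $(xw)_i=x_{w(i)}$ and on $\alpha\in\mathbb{Z}^N$ by $(w\alpha)_i=\alpha_{w^{-1}(i)}$. $\tau$ is a partition of $N$ other than $(N),(1^N)$; $\mathcal{Y}(\tau)$ is the set of reverse standard Young tableaux (fillings of the Ferrers diagram with $1,\dots,N$ decreasing along rows and columns); $c(i,T)=\mathrm{cm}(i,T)-\mathrm{rw}(i,T)$. $V_\tau$ has basis $\mathcal{Y}(\tau)$ with the irreducible orthogonal (Young) representation $\tau$ and invariant inner product $\langle T,T'\rangle_0=\delta_{T,T'}\prod_{i<j,\ c(i,T)\le c(j,T)-2}(1-(c(i,T)-c(j,T))^{-2})$; $\mathcal{P}_\tau$ = $V_\tau$-valued polynomials with $(wp)(x)=\tau(w)p(xw)$. $\mathcal{D}_ip=\partial_ip+\kappa\sum_{j\ne i}\tau(i,j)\frac{p(x)-p(x(i,j))}{x_i-x_j}$, $\mathcal{U}_ip=\mathcal{D}_i(x_ip)-\kappa\sum_{j<i}\tau(i,j)p(x(i,j))$,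 with $-1/h_\tau<\kappa<1/h_\tau$, $h_\tau=\tau_1+\ell(\tau)-1$. $\langle\cdot,\cdot\rangle_{\mathbb{T}}$ is the unique Hermitian form on $\mathcal{P}_\tau$ with $\langle1\otimes T,1\otimes T'\rangle_{\mathbb{T}}=\langle T,T'\rangle_0$, $\langle wf,wg\rangle_{\mathbb{T}}=\langle f,g\rangle_{\mathbb{T}}$, $\langle x_i\mathcal{D}_if,g\rangle_{\mathbb{T}}=\langle f,x_i\mathcal{D}_ig\rangle_{\mathbb{T}}$, $\langle x_if,x_ig\rangle_{\mathbb{T}}=\langle f,g\rangle_{\mathbb{T}}$. For $\alpha\in\mathbb{N}_0^N$: $\alpha^+$ its nonincreasing rearrangement; $r_\alpha(i)=\#\{j:\alpha_j>\alpha_i\}+\#\{j\le i:\alpha_j=\alpha_i\}$. $\beta\vartriangleleft\alpha$ iff $|\beta|=|\alpha|$ and either $\beta^+\prec\alpha^+$ or ($\beta^+=\alpha^+$ and $\beta\prec\alpha$), where $\beta\prec\alpha$ means $\beta\neq\alpha$ and all partial sums of $\beta$ are $\le$ those of $\alpha$. $\zeta_{\alpha,T}$ is the unique element of $\mathcal{P}_\tau$ of the form $x^\alpha\otimes\tau(r_\alpha^{-1})T+\sum_{\beta\vartriangleleft\alpha}x^\beta\otimes t_{\alpha\beta}$ with $\mathcal{U}_i\zeta_{\alpha,T}=(\alpha_i+1+\kappa c(r_\alpha(i),T))\zeta_{\alpha,T}$. $\lfloor\alpha,T\rfloor$: replace each entry $i$ of $T$ by $\alpha^+_i$; column-strict means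 strictly increasing down columns and weakly increasing along rows. $\mathcal{T}(\alpha,T)=\{(\beta,T'):\lfloor\beta,T'\rfloor=\lfloor\alpha,T\rfloor\}$. With $\mathcal{T}=\lfloor\lambda,T\rfloor$: $T_S(i,j)=\#\{(k,l):\mathcal{T}(k,l)>\mathcal{T}(i,j)\}+\#\{(k,l):\mathcal{T}(k,l)=\mathcal{T}(i,j),\ k>i\text{ or }(k=i,l\ge j)\}$. $\mathcal{E}_{-1}(\alpha,T)=\prod_{i<j,\ \alpha_i<\alpha_j}\bigl(1-\frac{\kappa}{\alpha_j-\alpha_i+\kappa(c(r_\alpha(j),T)-c(r_\alpha(i),T))}\bigr)$, $\mathcal{C}_{-1}(T)=\prod_{i<j,\ c(i,T)\le c(j,T)-2}\bigl(1-\frac{1}{c(i,T)-c(j,T)}\bigr)$. $J_{\lambda,T_S}:=\sum_{(\beta,T')\in\mathcal{T}(\lambda,T_S)}\frac{\mathcal{C}_{-1}(T_S)}{\mathcal{C}_{-1}(T')}\mathcal{E}_{-1}(\beta,T')\zeta_{\beta,T'}$. *)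

(* Defs.v *)
From HB Require Import structures.
From mathcomp Require Import all_boot all_order all_algebra all_fingroup.
From mathcomp Require Import mpoly.
From Stdlib Require Import ClassicalEpsilon.

Set Implicit Arguments.
Unset Strict Implicit.
Unset Printing Implicit Defensive.

Import Order.TTheory GRing.Theory Num.Theory.
Local Open Scope ring_scope.

(* Conventions: entries of tableaux and coordinates are 0-based:  *)
(* the paper's entry / index  i  (1..N) is our  i-1  : 'I_N.      *)
(* Cells (row, column) are 0-based as well.                         *)

Definition is_partition_of (N : nat) (t : seq nat) : bool :=
  [&& sorted geq t, all (fun k => 0 < k)%N t & sumn t == N].

Definition admissible_shape (N : nat) (t : seq nat) : bool :=
  [&& is_partition_of N t, t != [:: N] & t != nseq N 1%N].

Definition hook_tau (t : seq nat) : nat := (head 0%N t + size t).-1.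

Definition in_diagram (N : nat) (t : seq nat) (rc : 'I_N * 'I_N) : bool :=
  (rc.1 < size t)%N && (rc.2 < nth 0%N t rc.1)%N.

(* Reverse standard Young tableaux: f k = cell (row, column) of entry k *)

Definition is_rsyt (N : nat) (t : seq nat) (f : {ffun 'I_N -> 'I_N * 'I_N}) : bool :=
  [&& injectiveb f, [forall k, in_diagram t (f k)] &
   [forall a, forall b,
     ((((f a).1 == (f b).1) && ((f a).2 < (f b).2)%N) ==> (b < a)%N) &&
     ((((f a).2 == (f b).2) && ((f a).1 < (f b).1)%N) ==> (b < a)%N)]].

Definition RSYT (N : nat) (t : seq nat) := {f : {ffun 'I_N -> 'I_N * 'I_N} | is_rsyt t f}.

Section Tableaux.
Variables (N : nat) (t : seq nat).

Definition rw (T : RSYT N t) (k : 'I_N) : nat := (val T k).1.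
Definition cm (T : RSYT N t) (k : 'I_N) : nat := (val T k).2.
Definition content (T : RSYT N t) (k : 'I_N) : int := (cm T k)%:Z - (rw T k)%:Z.

Variable C : numClosedFieldType.

Definition ip0 (T T' : RSYT N t) : C :=
  if T == T' then
    \prod_(i : 'I_N) \prod_(j : 'I_N | (i < j)%N && (content T i <= content T j - 2)%R)
      (1 - ((content T i - content T j)%:~R : C) ^- 2)
  else 0.

Definition swapped (T T' : RSYT N t) (i i' : 'I_N) : bool :=
  val T == [ffun k => val T' (tperm i i' k)].

(* Coefficient of T in tau(s_i) T', where s_i = (i, i') with i' = i+1:
   Young's (seminormal) representation.  With b = 1/(c(i,T')-c(i+1,T')):
   same row: T'; same column: -T'; rw(i,T') < rw(i+1,T'): T'^(i) + b T';
   otherwise (1 - b^2) T'^(i) + b T'. *)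
Definition young_gen (i i' : 'I_N) (T T' : RSYT N t) : C :=
  if rw T' i == rw T' i' then (T == T')%:R
  else if cm T' i == cm T' i' then - (T == T')%:R
  else
    let b := ((content T' i - content T' i')%:~R : C)^-1 in
    if T == T' then b
    else if swapped T T' i i' then
      (if (rw T' i < rw T' i')%N then 1 else 1 - b ^+ 2)
    else 0.

(* matrices on V_tau indexed by Y(tau): A T T' = coefficient of T in A T' *)
Definition matmul (A B : RSYT N t -> RSYT N t -> C) : RSYT N t -> RSYT N t -> C :=
  fun T T'' => \sum_(T' : RSYT N t) A T T' * B T' T''.

(* rho is the representation tau of S_N (a homomorphism; note that the
   mathcomp product (s * u) is "first s, then u", i.e. u o s) with the
   above values on the adjacent transpositions. *)
Definition is_young_rep (rho : 'S_N -> RSYT N t -> RSYT N t -> C) : Prop :=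
  (forall s u : 'S_N, rho (s * u)%g = matmul (rho u) (rho s)) /\
  (forall i i' : 'I_N, val i' = (val i).+1 -> rho (tperm i i') = young_gen i i').

End Tableaux.

Notation VP C N t := {ffun RSYT N t -> {mpoly C[N]}}.

Section Operators.
Variables (C : numClosedFieldType) (N : nat) (t : seq nat).
Variable rho : 'S_N -> RSYT N t -> RSYT N t -> C.
Variable kappa : C.

Definition psub (w : 'S_N) (q : {mpoly C[N]}) : {mpoly C[N]} :=
  q \mPo [tuple 'X_(w k) | k < N].

Definition mapply (A : RSYT N t -> RSYT N t -> C) (p : VP C N t) : VP C N t :=
  [ffun T => \sum_(T' : RSYT N t) A T T' *: p T'].

Definition act (w : 'S_N) (p : VP C N t) : VP C N t :=
  mapply (rho w) [ffun T => psub w (p T)].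

Definition divdiff (i j : 'I_N) (q : {mpoly C[N]}) : {mpoly C[N]} :=
  epsilon (inhabits 0) (fun r => ('X_i - 'X_j) * r = q - psub (tperm i j) q).

Definition xmul (i : 'I_N) (p : VP C N t) : VP C N t := [ffun T => 'X_i * p T].

Definition dunkl (i : 'I_N) (p : VP C N t) : VP C N t :=
  [ffun T => mderiv i (p T)] +
  kappa *: \sum_(j : 'I_N | j != i)
             mapply (rho (tperm i j)) [ffun T => divdiff i j (p T)].

Definition Uop (i : 'I_N) (p : VP C N t) : VP C N t :=
  dunkl i (xmul i p) -
  kappa *: \sum_(j : 'I_N | (j < i)%N)
             mapply (rho (tperm i j)) [ffun T => psub (tperm i j) (p T)].

Definition mono (m : 'X_{1..N}) (v : RSYT N t -> C) : VP C N t :=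
  [ffun T => v T *: 'X_[m]].

Definition basisv (T : RSYT N t) : RSYT N t -> C := fun T' => (T' == T)%:R.

Definition is_torus_form (H : VP C N t -> VP C N t -> C) : Prop :=
  (forall a f g h, H (a *: f + g) h = a * H f h + H g h) /\
  (forall f g, H g f = Num.conj (H f g)) /\
  (forall T T', H (mono 0%MM (basisv T)) (mono 0%MM (basisv T')) = ip0 C T T') /\
  (forall w f g, H (act w f) (act w g) = H f g) /\
  (forall i f g, H (xmul i (dunkl i f)) g = H f (xmul i (dunkl i g))) /\
  (forall i f g, H (xmul i f) (xmul i g) = H f g).

End Operators.

Section Rank.
Variables (N : nat) (a : 'X_{1..N}).

Definition rank_nat (i : 'I_N) : nat :=
  (#|[pred j : 'I_N | (a i < a j)%N]| +
   #|[pred j : 'I_N | (j < i)%N && (a j == a i)]|)%N.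

Let above (i : 'I_N) := [pred j : 'I_N | (a i < a j)%N || ((j < i)%N && (a j == a i))].

Lemma rank_natE i : rank_nat i = #|above i|.
Proof.
rewrite /rank_nat.
have -> : #|above i| = #|[predU [pred j : 'I_N | (a i < a j)%N] &
                               [pred j : 'I_N | (j < i)%N && (a j == a i)]]|.
  by apply: eq_card => j.
rewrite -cardUI.
have -> : #|[predI [pred j : 'I_N | (a i < a j)%N] &
                   [pred j : 'I_N | (j < i)%N && (a j == a i)]]| = 0%N.
  apply: eq_card0 => j; rewrite !inE; apply/negP => /andP [lt /andP [_ /eqP e]].
  by move: lt; rewrite e ltnn.
by rewrite addn0.
Qed.

Lemma above_irr i : i \notin above i.
Proof. by rewrite inE ltnn eqxx andbT ltnn. Qed.

Lemma rank_lt i : (rank_nat i < N)%N.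
Proof.
rewrite rank_natE -[X in (_ < X)%N]card_ord.
apply: proper_card; apply/properP; split.
  by apply/subsetP.
by exists i => //; apply: above_irr.
Qed.

Definition rank_ord (i : 'I_N) : 'I_N := Ordinal (rank_lt i).

Lemma above_trans i j : j \in above i -> {subset above j <= above i}.
Proof.
rewrite !inE => hj k; rewrite !inE.
case/orP: hj => [hij | /andP [hji /eqP eji]].
  case/orP => [hjk | /andP [_ /eqP ekj]].
    by rewrite (ltn_trans hij hjk).
  by rewrite ekj hij.
case/orP => [hjk | /andP [hkj /eqP ekj]].
  by rewrite -eji hjk.
by rewrite (ltn_trans hkj hji) ekj eji eqxx orbT.
Qed.

Lemma above_total i j : i != j -> (j \in above i) || (i \in above j).
Proof.
move=> nij; rewrite !inE.
case: (ltngtP (a i) (a j)) => [h|h|e] //=; rewrite ?orbT //.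
by case: (ltngtP i j) => // /val_inj eij; rewrite eij eqxx in nij.
Qed.

Lemma rank_inj : injective rank_ord.
Proof.
move=> i j /(congr1 val) /=; rewrite !rank_natE => e.
apply/eqP; apply: contraT => nij.
suff: (#|above i| < #|above j|)%N || (#|above j| < #|above i|)%N.
  by rewrite e ltnn.
case/orP: (above_total nij) => h.
- apply/orP; right; apply: proper_card; apply/properP; split.
    by apply/subsetP; apply: above_trans.
  by exists j => //; apply: above_irr.
- apply/orP; left; apply: proper_card; apply/properP; split.
    by apply/subsetP; apply: above_trans.
  by exists i => //; apply: above_irr.
Qed.

Definition rperm : 'S_N := perm rank_inj.

Lemma rpermE i : val (rperm i) = rank_nat i.
Proof. by rewrite permE. Qed.

End Rank.

Section Orders.
Variable N : nat.

Definition mplus (a : 'X_{1..N}) : 'X_{1..N} :=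
  [multinom nth 0%N (sort geq (a : seq nat)) i | i < N].

Definition is_partition_mnm (a : 'X_{1..N}) : Prop :=
  forall i j : 'I_N, (i <= j)%N -> (a j <= a i)%N.

Definition psums_le (b a : 'X_{1..N}) : bool :=
  [forall k : 'I_N.+1,
     (\sum_(i < N | (i < k)%N) b i <= \sum_(i < N | (i < k)%N) a i)%N].

Definition dom_lt (b a : 'X_{1..N}) : bool := (b != a) && psums_le b a.

Definition tri_lt (b a : 'X_{1..N}) : bool :=
  (mdeg b == mdeg a) &&
  (dom_lt (mplus b) (mplus a) || ((mplus b == mplus a) && dom_lt b a)).

End Orders.

Section Fillings.
Variables (N : nat) (t : seq nat).

(* |_alpha,T_| : the entry k of T (at cell T k) is replaced by alpha^+_k;
   cells outside the diagram get 0 *)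
Definition filling (a : 'X_{1..N}) (T : RSYT N t) : {ffun 'I_N * 'I_N -> nat} :=
  [ffun rc => if [pick k | val T k == rc] is Some k then mplus a k else 0%N].

Definition column_strict (F : {ffun 'I_N * 'I_N -> nat}) : bool :=
  [forall rc, forall rc',
     (in_diagram t rc && in_diagram t rc') ==>
     ((((rc'.1 == rc.1.+1 :> nat) && (rc'.2 == rc.2)) ==> (F rc < F rc')%N) &&
      (((rc'.1 == rc.1) && (rc'.2 == rc.2.+1 :> nat)) ==> (F rc <= F rc')%N))].

Definition is_sink (lam : 'X_{1..N}) (T TS : RSYT N t) : Prop :=
  let F := filling lam T in
  forall k : 'I_N,
    let ij := val TS k in
    k.+1 =
      (#|[pred kl : 'I_N * 'I_N | in_diagram t kl && (F ij < F kl)%N]| +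
       #|[pred kl : 'I_N * 'I_N | [&& in_diagram t kl, F kl == F ij &
            ((ij.1 < kl.1)%N || ((kl.1 == ij.1) && (ij.2 <= kl.2)%N))]]|)%N.

End Fillings.

Section Jack.
Variables (C : numClosedFieldType) (N : nat) (t : seq nat).
Variable rho : 'S_N -> RSYT N t -> RSYT N t -> C.
Variable kappa : C.

Definition is_nsJack (zeta : 'X_{1..N} -> RSYT N t -> VP C N t) : Prop :=
  forall (a : 'X_{1..N}) (T : RSYT N t),
    [/\ (forall T'', (zeta a T T'')@_a = rho ((rperm a)^-1)%g T'' T),
        (forall T'' (b : 'X_{1..N}), (zeta a T T'')@_b != 0 -> b != a -> tri_lt b a) &
        (forall i : 'I_N,
           Uop rho kappa i (zeta a T) =
           ((a i)%:R + 1 + kappa * (content T (rperm a i))%:~R) *: zeta a T)].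

Definition Em1 (a : 'X_{1..N}) (T : RSYT N t) : C :=
  \prod_(i : 'I_N) \prod_(j : 'I_N | (i < j)%N && (a i < a j)%N)
    (1 - kappa / ((a j)%:R - (a i)%:R +
        kappa * (content T (rperm a j) - content T (rperm a i))%:~R)).

Definition Cm1 (T : RSYT N t) : C :=
  \prod_(i : 'I_N) \prod_(j : 'I_N | (i < j)%N && (content T i <= content T j - 2)%R)
    (1 - ((content T i - content T j)%:~R : C)^-1).

Definition mnm_of (d : nat) (b : {ffun 'I_N -> 'I_d}) : 'X_{1..N} :=
  [multinom val (b i) | i < N].

(* J_{lam,TS} = sum over (beta,T') with |_beta,T'_| = |_lam,TS_|.
   Such beta are rearrangements of lam^+, so their entries are <= |lam|;
   they are enumerated injectively by functions 'I_N -> 'I_(|lam|+1). *)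
Definition Jpoly (zeta : 'X_{1..N} -> RSYT N t -> VP C N t)
    (lam : 'X_{1..N}) (TS : RSYT N t) : VP C N t :=
  \sum_(b : {ffun 'I_N -> 'I_(mdeg lam).+1})
   \sum_(T' : RSYT N t | filling (mnm_of b) T' == filling lam TS)
     (Cm1 TS / Cm1 T' * Em1 (mnm_of b) T') *: zeta (mnm_of b) T'.

End Jack.

(* Main.v *)
Require Import Defs.
From HB Require Import structures.
From mathcomp Require Import all_boot all_order all_algebra all_fingroup.
From mathcomp Require Import mpoly.
From Stdlib Require Import ClassicalEpsilon.
From mathcomp Require Import ring.
From mathcomp Require Import zify.
Import Order.TTheory GRing.Theory Num.Theory.
Set Implicit Arguments.
Unset Strict Implicit.
Unset Printing Implicit Defensive.
Local Open Scope ring_scope.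

Section Basic.
Context (C : numClosedFieldType) (N : nat) (t : seq nat).
Context (rho : 'S_N -> RSYT N t -> RSYT N t -> C) (kappa : C).
Context (H : VP C N t -> VP C N t -> C) (hH : is_torus_form rho kappa H).

Lemma psubE (w : 'S_N) (q : {mpoly C[N]}) : psub w q = msym w q.
Proof.
rewrite /psub -[RHS]comp_mpoly_id msym_mPo; congr comp_mpoly.
by apply: eq_from_tnth => i; rewrite !tnth_map !tnth_ord_tuple.
Qed.

Lemma actE w p T : Defs.act rho w p T = \sum_T' rho w T T' *: msym w (p T').
Proof. by rewrite /Defs.act /mapply ffunE; apply: eq_bigr => T' _; rewrite ffunE psubE. Qed.

Lemma act_comp (hr : forall s u : 'S_N, rho (s * u)%g = matmul (rho u) (rho s)) u s p :
  Defs.act rho u (Defs.act rho s p) = Defs.act rho (s * u)%g p.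
Proof.
apply/ffunP => T; rewrite !actE hr /matmul.
have ms (w : 'S_N) (I : finType) (F : I -> {mpoly C[N]}) : msym w (\sum_i F i) = \sum_i msym w (F i).
  exact: raddf_sum.
have mz (w : 'S_N) a (q : {mpoly C[N]}) : msym w (a *: q) = a *: msym w q by exact: msymZ.
under eq_bigr do rewrite actE ms scaler_sumr.
under [RHS]eq_bigr do rewrite msymMm scaler_suml.
rewrite exchange_big /=; apply: eq_bigr => T2 _.
apply: eq_bigr => T1 _.
by rewrite mz scalerA.
Qed.

Lemma HD f g h : H (f + g) h = H f h + H g h.
Proof. by move: (hH.1 1 f g h); rewrite scale1r mul1r. Qed.
Lemma HZ a f h : H (a *: f) h = a * H f h.
Proof.
have h0 : H 0 h = 0.
  move: (hH.1 1 0 0 h); rewrite scale1r addr0 mul1r => e; apply: (addrI (H 0 h)); by rewrite -e addr0.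
by move: (hH.1 a f 0 h); rewrite addr0 h0 addr0.
Qed.
Lemma H0 h : H 0 h = 0.
Proof. by rewrite -(scale0r 0) HZ mul0r. Qed.
Lemma Hsum (I : Type) (r : seq I) (P : pred I) F h :
  H (\sum_(i <- r | P i) F i) h = \sum_(i <- r | P i) H (F i) h.
Proof. by elim/big_rec2: _ => [|i x y _ <-]; rewrite ?H0 ?HD. Qed.
Lemma Hsym f g : H g f = Num.conj (H f g).
Proof. by case: hH => _ [+ _]; apply. Qed.
Lemma HDr f g h : H h (f + g) = H h f + H h g.
Proof. by rewrite (Hsym (f+g) h) (Hsym f h) (Hsym g h) HD rmorphD. Qed.
Lemma HZr a f h : H h (a *: f) = Num.conj a * H h f.
Proof. by rewrite (Hsym (a *: f) h) (Hsym f h) HZ rmorphM. Qed.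
Lemma H0r h : H h 0 = 0.
Proof. by rewrite (Hsym 0 h) H0 rmorph0. Qed.
Lemma Hsumr (I : Type) (r : seq I) (P : pred I) F h :
  H h (\sum_(i <- r | P i) F i) = \sum_(i <- r | P i) H h (F i).
Proof. by elim/big_rec2: _ => [|i x y _ <-]; rewrite ?H0r ?HDr. Qed.
Lemma HBr f g h : H h (f - g) = H h f - H h g.
Proof. by rewrite HDr -scaleN1r HZr rmorphN1 mulN1r. Qed.
Lemma HB f g h : H (f - g) h = H f h - H g h.
Proof. by rewrite HD -scaleN1r HZ mulN1r. Qed.

Lemma act_sa (hr : forall s u : 'S_N, rho (s * u)%g = matmul (rho u) (rho s)) s f g :
  (s * s = 1)%g -> H (Defs.act rho s f) g = H f (Defs.act rho s g).
Proof.
move=> ss; case: hH => _ [_ [_ [inv _]]].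
rewrite -(inv 1%g) -[in RHS](inv s) act_comp // mulg1.
by rewrite -ss -act_comp.
Qed.
End Basic.
Section DD.
Context (C : numClosedFieldType) (N : nat).

Lemma psubE' (w : 'S_N) (q : {mpoly C[N]}) : psub w q = msym w q.
Proof.
rewrite /psub -[RHS]comp_mpoly_id msym_mPo; congr comp_mpoly.
by apply: eq_from_tnth => i; rewrite !tnth_map !tnth_ord_tuple.
Qed.

Lemma psubX (w : 'S_N) (k : 'I_N) : psub w ('X_k : {mpoly C[N]}) = 'X_(w k).
Proof. by rewrite /psub comp_mpolyXU -tnth_nth tnth_map tnth_ord_tuple. Qed.

Lemma XiXj_neq0 (i j : 'I_N) : i != j -> ('X_i - 'X_j : {mpoly C[N]}) != 0.
Proof.
move=> nij; apply/eqP => /(congr1 (mcoeff U_(i))).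
rewrite mcoeffB !mcoeffXU eqxx eq_sym (negbTE nij) mcoeff0 subr0 => /eqP.
by rewrite oner_eq0.
Qed.

Definition goodq (i j : 'I_N) (q : {mpoly C[N]}) :=
  exists r, ('X_i - 'X_j) * r = q - msym (tperm i j) q.

Lemma goodq_all (i j : 'I_N) q : goodq i j q.
Proof.
have gD p1 p2 : goodq i j p1 -> goodq i j p2 -> goodq i j (p1 + p2).
  move=> [r1 e1] [r2 e2]; exists (r1 + r2).
  by rewrite mulrDr e1 e2 msymD opprD addrACA.
have gZ c p : goodq i j p -> goodq i j (c *: p).
  move=> [r e]; exists (c *: r); by rewrite -scalerAr e msymZ scalerBr.
have gM p1 p2 : goodq i j p1 -> goodq i j p2 -> goodq i j (p1 * p2).
  move=> [r1 e1] [r2 e2]; exists (r1 * p2 + msym (tperm i j) p1 * r2).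
  rewrite mulrDr mulrA e1 mulrCA e2 msymM; ring.
have g1 : goodq i j 1 by exists 0; rewrite msym1 mulr0 subrr.
have gX k : goodq i j 'X_k.
  rewrite /goodq -psubE' psubX.
  case: (tpermP i j k) => [->|->|ni nj].
  - by exists 1; rewrite mulr1.
  - by exists (-1); rewrite mulrN1 opprB.
  - by exists 0; rewrite mulr0 subrr.
have gXm m : goodq i j 'X_[m].
  rewrite mpolyXE_id; apply: (big_ind (goodq i j)) => // k _.
  elim: (m k) => [|n IH]; first by rewrite expr0.
  by rewrite exprS; apply: gM.
elim/mpolyind: q => [|c m p _ _ gp]; last by apply: gD => //; apply: gZ; apply: gXm.
by exists 0; rewrite mulr0 msym0 subrr.
Qed.

Lemma divdiffP (i j : 'I_N) (q : {mpoly C[N]}) :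
  ('X_i - 'X_j) * divdiff i j q = q - psub (tperm i j) q.
Proof.
have ex : exists r, ('X_i - 'X_j) * r = q - psub (tperm i j) q.
  by have [r e] := goodq_all i j q; exists r; rewrite psubE'.
exact: (epsilon_spec _ _ ex).
Qed.

Lemma divdiffX (i j : 'I_N) (q : {mpoly C[N]}) : i != j ->
  divdiff i j ('X_i * q) = 'X_i * divdiff i j q + psub (tperm i j) q.
Proof.
move=> nij; have := mulfI (XiXj_neq0 nij); apply.
rewrite divdiffP mulrDr mulrCA divdiffP !psubE' msymM -psubE' psubX tpermL.
ring.
Qed.

Lemma mderivXi (i : 'I_N) (q : {mpoly C[N]}) :
  mderiv i ('X_i * q) = q + 'X_i * mderiv i q.
Proof.
have h1 : mderiv i ('X_i : {mpoly C[N]}) = 1.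
  rewrite mderivX mnm1E eqxx scale1r -mpolyX0; congr mpolyX.
  by apply/mnmP => k; rewrite mnmBE !mnmE subnn.
by rewrite mderivM h1 mul1r.
Qed.
End DD.
Section Dunkl.
Context (C : numClosedFieldType) (N : nat) (t : seq nat).
Context (rho : 'S_N -> RSYT N t -> RSYT N t -> C) (kappa : C).

Lemma mapplyE A (p : VP C N t) T : mapply A p T = \sum_T' A T T' *: p T'.
Proof. by rewrite /mapply ffunE. Qed.

Lemma dunklE i p T : dunkl rho kappa i p T = mderiv i (p T) +
  kappa *: \sum_(j | j != i) \sum_T' rho (tperm i j) T T' *: divdiff i j (p T').
Proof.
rewrite /dunkl !ffunE sum_ffunE; congr (_ + kappa *: _); apply: eq_bigr => j _.
by rewrite mapplyE; apply: eq_bigr => T' _; rewrite ffunE.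
Qed.

Lemma dunkl_xmul i p : dunkl rho kappa i (xmul i p) =
  xmul i (dunkl rho kappa i p) + p + kappa *: \sum_(j | j != i) Defs.act rho (tperm i j) p.
Proof.
apply/ffunP => T. rewrite (dunklE i (xmul i p) T). rewrite !ffunE !sum_ffunE mderivXi.
have e1 j : j != i -> \sum_T' rho (tperm i j) T T' *: divdiff i j (xmul i p T') =
   \sum_T' rho (tperm i j) T T' *: ('X_i * divdiff i j (p T')) +
   \sum_T' rho (tperm i j) T T' *: psub (tperm i j) (p T').
  move=> nj; rewrite -big_split /=; apply: eq_bigr => T' _.
  by rewrite ffunE divdiffX 1?eq_sym // scalerDr.
rewrite (eq_bigr _ e1) big_split /=.
have e2 (F : 'I_N -> RSYT N t -> {mpoly C[N]}) :
  'X_i * (kappa *: \sum_(j < N | j != i) \sum_T' rho (tperm i j) T T' *: F j T')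
  = kappa *: \sum_(j < N | j != i) \sum_T' rho (tperm i j) T T' *: ('X_i * F j T').
  rewrite -scalerAr mulr_sumr; congr (_ *: _); apply: eq_bigr => j _; rewrite mulr_sumr; apply: eq_bigr => T' _.
  by rewrite scalerAr.
rewrite mulrDr -[X in _ = _ + X + _ + _]scalerAr [X in _ = _ + kappa *: X + _ + _]mulr_sumr.
under [X in _ = _ + kappa *: X + _ + _]eq_bigr => j _ do rewrite mapplyE mulr_sumr.
under [X in _ = _ + kappa *: X + _ + _]eq_bigr => j _ do under eq_bigr => T' _ do rewrite ffunE -scalerAr.
under [X in _ = _ + _ + kappa *: X]eq_bigr => j _ do rewrite actE.
under [X in _ + kappa *: (_ + X) = _]eq_bigr => j _ do under eq_bigr => T' _ do rewrite psubE'.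
by rewrite scalerDr addrA; congr (_ + _); rewrite -addrA addrC.
Qed.

End Dunkl.
Section SA.
Context (C : numClosedFieldType) (N : nat) (t : seq nat).
Context (rho : 'S_N -> RSYT N t -> RSYT N t -> C) (kappa : C).
Context (H : VP C N t -> VP C N t -> C) (hH : is_torus_form rho kappa H).
Context (hr : forall s u : 'S_N, rho (s * u)%g = matmul (rho u) (rho s)).
Context (kreal : kappa \is Num.real).

Lemma UopE i p : Uop rho kappa i p =
  xmul i (dunkl rho kappa i p) + p +
  (kappa *: \sum_(j | j != i) Defs.act rho (tperm i j) p -
   kappa *: \sum_(j : 'I_N | (j < i)%N) Defs.act rho (tperm i j) p).
Proof. by rewrite /Uop dunkl_xmul addrA. Qed.

Lemma Sa_sa (P : pred 'I_N) i f g :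
  H (\sum_(j | P j) Defs.act rho (tperm i j) f) g =
  H f (\sum_(j | P j) Defs.act rho (tperm i j) g).
Proof.
rewrite (Hsum hH) (Hsumr hH); apply: eq_bigr => j _.
by apply: (act_sa hH hr); rewrite tperm2.
Qed.

Lemma Uop_sa i f g : H (Uop rho kappa i f) g = H f (Uop rho kappa i g).
Proof.
have [_ [_ [_ [_ [xd _]]]]] := hH.
have HN f0 g0 : H (- f0) g0 = - H f0 g0 by rewrite -scaleN1r (HZ hH) mulN1r.
have HNr f0 g0 : H f0 (- g0) = - H f0 g0 by rewrite -scaleN1r (HZr hH) rmorphN1 mulN1r.
rewrite !UopE !(HD hH) !(HDr hH) !HN !HNr !(HZ hH) !(HZr hH) conj_Creal //.
by rewrite xd !Sa_sa.
Qed.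

Lemma eig_ortho i f g (mu nu : C) :
  nu \is Num.real -> Uop rho kappa i f = mu *: f -> Uop rho kappa i g = nu *: g ->
  mu != nu -> H f g = 0.
Proof.
move=> nr ef eg nmn.
have : mu * H f g = nu * H f g.
  by rewrite -(HZ hH) -ef Uop_sa eg (HZr hH) conj_Creal.
move/eqP; rewrite -subr_eq0 -mulrBl mulf_eq0 subr_eq0 (negbTE nmn) /=.
by move/eqP.
Qed.
End SA.
Section K0.
Context (C : numClosedFieldType) (N : nat) (t : seq nat).
Context (rho : 'S_N -> RSYT N t -> RSYT N t -> C).
Context (H : VP C N t -> VP C N t -> C) (hH : is_torus_form rho 0 H).

Lemma coef_dX (i : 'I_N) (q : {mpoly C[N]}) b :
  (mderiv i ('X_i * q))@_b = (b i).+1%:R * q@_b.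
Proof.
rewrite mcoeff_mderiv mulrC addmC mcoeffMX.
by rewrite mulr_natl.
Qed.

Lemma zeta0_mono (a : 'X_{1..N}) (z : VP C N t) (v : RSYT N t -> C) :
  (forall T0, (z T0)@_a = v T0) ->
  (forall i : 'I_N, Uop rho 0 i z = ((a i)%:R + 1) *: z) ->
  z = mono a v.
Proof.
move=> ha hu; apply/ffunP => T0; rewrite ffunE; apply/mpolyP => b.
rewrite mcoeffZ mcoeffX.
have [<-|nab] := eqVneq a b; first by rewrite mulr1 ha.
rewrite mulr0; apply/eqP; apply: contraR nab => nz.
apply/eqP/mnmP => i.
have := congr1 (fun p : VP C N t => (p T0)@_b) (hu i).
rewrite /= /Uop scale0r subr0 /dunkl scale0r addr0 !ffunE coef_dX mcoeffZ.
move/eqP; rewrite -subr_eq0 -mulrBl mulf_eq0 (negbTE nz) orbF subr_eq0.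
by rewrite natr1 eqr_nat eqSS => /eqP ->.
Qed.

Lemma mono_xmul i a (v : RSYT N t -> C) : xmul i (mono a v) = mono (a + U_(i))%MM v.
Proof.
apply/ffunP => T0; rewrite !ffunE mpolyXD -scalerAr mulrC.
by [].
Qed.

Lemma H_mono a (v w : RSYT N t -> C) : H (mono a v) (mono a w) = H (mono 0%MM v) (mono 0%MM w).
Proof.
have [_ [_ [_ [_ [_ xx]]]]] := hH.
move: {2}(mdeg a) (erefl (mdeg a)) => n; elim: n a => [|n IH] a ha.
  by move/eqP: ha; rewrite mdeg_eq0 => /eqP ->.
case: (boolP [exists i, (0 < a i)%N]) => [/existsP [i hi] | /existsPn h]; last first.
  have a0 : a = 0%MM by apply/mnmP => i; move: (h i); rewrite lt0n negbK mnmE => /eqP.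
  by move: ha; rewrite a0 mdeg0.
have ea : a = ((a - U_(i)) + U_(i))%MM.
  by rewrite submK //; apply/mnm_lepP => k; rewrite mnm1E; case: eqP => // <-.
rewrite ea -!mono_xmul xx; apply: IH.
by move: ha; rewrite {1}ea mdegD mdeg1 addn1 => -[].
Qed.

Lemma act_mono0 w (T : RSYT N t) : Defs.act rho w (mono 0%MM (basisv C T)) = mono 0%MM (fun T0 => rho w T0 T).
Proof.
apply/ffunP => T0; rewrite actE ffunE (bigD1 T) //= big1 ?addr0 => [|T' nT].
  by rewrite ffunE /basisv eqxx scale1r mpolyX0 msym1.
by rewrite ffunE /basisv (negbTE nT) scale0r msym0 scaler0.
Qed.

Lemma ortho_k0 zeta (hz : is_nsJack rho 0 zeta) a T1 T2 :
  T1 != T2 -> H (zeta a T1) (zeta a T2) = 0.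
Proof.
move=> n12.
have zm T : zeta a T = mono a (fun T0 => rho ((rperm a)^-1)%g T0 T).
  have [c _ e] := hz a T; apply: zeta0_mono => [T0|i]; first exact: c.
  by rewrite e mul0r addr0.
rewrite !zm H_mono -!act_mono0.
have [_ [_ [i0 [inv _]]]] := hH.
by rewrite inv i0 /ip0 (negbTE n12).
Qed.
End K0.

Lemma sum_lt_const (n m : nat) (F : nat -> nat) : (m <= n)%N ->
  (\sum_(c < n | (c < m)%N) F c = \sum_(c < m) F c)%N.
Proof.
move=> mn; rewrite -(big_mkord (fun c => (c < m)%N) F) -(big_mkord xpredT F) (big_cat_nat (leq0n m) mn) /=.
rewrite [X in (_ + X)%N]big1_seq ?addn0 => [|i /andP [him]]; last first.
  by rewrite mem_iota subnKC // => /andP [h _]; rewrite ltnNge h in him.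
by rewrite big_nat_cond [RHS]big_nat_cond; apply: eq_bigl => i; rewrite andbT andbb.
Qed.

Lemma card_lt (n m : nat) : (m <= n)%N -> #|[pred c : 'I_n | (c < m)%N]| = m.
Proof.
move=> mn; rewrite -sum1_card (sum_lt_const (fun _ => 1%N) mn).
by rewrite sum1_card card_ord.
Qed.

Lemma nth_le_sumn (s : seq nat) r : (nth 0 s r <= sumn s)%N.
Proof. elim: s r => [|x s IH] [|r] //=; [exact: leq_addr | exact: leq_trans (IH r) (leq_addl _ _)]. Qed.

Lemma size_le_sumn (s : seq nat) : all (fun k => 0 < k)%N s -> (size s <= sumn s)%N.
Proof. by elim: s => //= x s IH /andP [hx /IH]; rewrite -add1n; apply: leq_add. Qed.

Section Tab.
Context (N : nat) (t : seq nat) (ht : is_partition_of N t).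

Lemma in_diagramE (rc : 'I_N * 'I_N) : in_diagram t rc = (rc.2 < nth 0 t rc.1)%N.
Proof.
rewrite /in_diagram; case: ltnP => //= h.
by rewrite nth_default.
Qed.

Lemma card_diag : #|[pred rc : 'I_N * 'I_N | in_diagram t rc]| = N.
Proof.
case/and3P: ht => _ _ /eqP hs.
rewrite -sum1_card.
rewrite (eq_bigl (fun rc : 'I_N * 'I_N => (rc.2 < nth 0 t rc.1)%N)); last by move=> rc; rewrite inE in_diagramE.
rewrite -(pair_big_dep xpredT (fun (r c : 'I_N) => (c < nth 0 t r)%N) (fun _ _ => 1%N)) /=.
rewrite (eq_bigr (fun r : 'I_N => nth 0 t r)); last first.
  move=> r _; rewrite sum1_card card_lt //; by apply: leq_trans (nth_le_sumn t r) _; rewrite hs.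
have sN : (size t <= N)%N.
  by apply: leq_trans (size_le_sumn _) _; [case/and3P: ht | rewrite hs].
rewrite -(big_mkord xpredT (fun r => nth 0 t r)) (big_cat_nat (leq0n _) sN) /=.
rewrite [X in (_ + X)%N]big1_seq ?addn0 => [|i /andP [_]]; last first.
  by rewrite mem_iota subnKC // => /andP [h _]; rewrite nth_default.
by rewrite -[RHS]hs sumnE [RHS](big_nth 0).
Qed.

Lemma rsyt_inj (T : RSYT N t) : injective (val T).
Proof. by case/and3P: (valP T) => /injectiveP. Qed.

Lemma rsyt_in (T : RSYT N t) k : in_diagram t (val T k).
Proof. by case/and3P: (valP T) => _ /forallP. Qed.

Lemma rsyt_row (T : RSYT N t) a b : (val T a).1 = (val T b).1 -> ((val T a).2 < (val T b).2)%N -> (b < a)%N.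
Proof.
move=> e l; case/and3P: (valP T) => _ _ /forallP /(_ a) /forallP /(_ b) /andP [h1 _].
by move: h1; rewrite e eqxx l.
Qed.

Lemma rsyt_col (T : RSYT N t) a b : (val T a).2 = (val T b).2 -> ((val T a).1 < (val T b).1)%N -> (b < a)%N.
Proof.
move=> e l; case/and3P: (valP T) => _ _ /forallP /(_ a) /forallP /(_ b) /andP [_ h2].
by move: h2; rewrite e eqxx l.
Qed.

Lemma rsyt_surj (T : RSYT N t) rc : in_diagram t rc -> exists k, val T k = rc.
Proof.
move=> hrc.
have sub : [set val T k | k in 'I_N] \subset [pred rc | in_diagram t rc].
  by apply/subsetP => x /imsetP [k _ ->]; rewrite inE rsyt_in.
have /subset_cardP : #|[set val T k | k in 'I_N]| = #|[pred rc : 'I_N * 'I_N | in_diagram t rc]|.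
  by rewrite card_diag card_imset ?card_ord //; apply: rsyt_inj.
move/(_ sub)/(_ rc); rewrite inE hrc => /imsetP [k _ ->]; by exists k.
Qed.

Lemma nth_mono r r' : (r <= r')%N -> (r' < size t)%N -> (nth 0 t r' <= nth 0 t r)%N.
Proof.
move=> rr' r't; case/and3P: ht => so _ _.
have gt : transitive geq by move=> y x z h1 h2; apply: leq_trans h2 h1.
have := sorted_leq_nth gt (fun x => leqnn x) 0 so.
by move/(_ r r'); rewrite !inE r't (leq_ltn_trans rr' r't) => /(_ isT isT rr').
Qed.

Lemma content_key (A B : RSYT N t) (k : 'I_N) :
  (forall j : 'I_N, (k < j)%N -> val A j = val B j) -> content A k = content B k ->
  ((val A k).1 < (val B k).1)%N -> False.
Proof.
move=> hj hc hr.
have inB := rsyt_in B k; move: inB; rewrite /in_diagram => /andP [rB cB].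
pose rc0 := ((val A k).1, (val B k).2).
have in0 : in_diagram t rc0.
  rewrite in_diagramE /=; apply: leq_trans cB _; apply: nth_mono => //; exact: ltnW.
have [j hjB] := rsyt_surj B in0.
have kj : (k < j)%N by apply: (rsyt_col (T:=B)); rewrite hjB.
have hjA := hj j kj; rewrite hjB in hjA.
have jk : (j < k)%N.
  apply: (rsyt_row (T:=A)); rewrite hjA //=.
  move: hc hr; rewrite /content /cm /rw; change (sval A) with (val A); change (sval B) with (val B); lia.
lia.
Qed.

Lemma content_inj (A B : RSYT N t) : (forall k, content A k = content B k) -> A = B.
Proof.
move=> hc; apply: val_inj; apply/ffunP => k.
suff: forall d (k : 'I_N), (N - k <= d)%N -> val A k = val B k by move=> h; apply: (h N); lia.
elim=> [|d IH] {}k hk; first by have := ltn_ord k; lia.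
have hj (j : 'I_N) : (k < j)%N -> val A j = val B j by move=> kj; apply: IH; have := ltn_ord j; lia.
case: (ltngtP (val A k).1 (val B k).1) => [h|h|h].
- by case: (content_key hj (hc k) h).
- by case: (@content_key B A k (fun j kj => esym (hj j kj)) (esym (hc k)) h).
- move: (hc k); rewrite /content /cm /rw => e.
  move: h e; case: (val A k) => a b; case: (val B k) => a' b' /= h e.
  by congr pair; apply: val_inj => /=; lia.
Qed.

Lemma content_lt (A B : RSYT N t) k l :
  (content A k - content B l < (hook_tau t)%:Z)%R.
Proof.
have := rsyt_in A k; have := rsyt_in B l; rewrite /in_diagram => /andP [rB _] /andP [rA cA].
have hd : (nth 0 t (val A k).1 <= head 0 t)%N.
  by rewrite -nth0; apply: nth_mono.
rewrite /hook_tau /content /cm /rw; change (sval A) with (val A); change (sval B) with (val B).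
move: hd cA rB; lia.
Qed.

Lemma mplus_part (a : 'X_{1..N}) : is_partition_mnm a -> mplus a = a.
Proof.
move=> hp.
have gt : transitive geq by move=> y x z h1 h2; apply: leq_trans h2 h1.
have so : sorted geq (a : seq nat).
  apply/(sortedP 0) => i hi; rewrite size_tuple in hi.
  have := hp (Ordinal (ltnW hi)) (Ordinal hi); rewrite !(mnm_nth 0) /=; apply; exact: leqnSn.
apply/mnmP => i; rewrite mnmE (sorted_sort gt so) -mnm_nth //.
Qed.

Lemma filling_at (a : 'X_{1..N}) (T : RSYT N t) m : filling a T (val T m) = mplus a m.
Proof.
rewrite ffunE; case: pickP => [k /eqP e | h]; first by rewrite (rsyt_inj e).
by move: (h m); rewrite eqxx.
Qed.

Lemma filling_out (a : 'X_{1..N}) (T : RSYT N t) rc : ~~ in_diagram t rc -> filling a T rc = 0%N.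
Proof.
move=> nin; rewrite ffunE; case: pickP => [k /eqP e | //].
by move: nin; rewrite -e rsyt_in.
Qed.

Lemma count_filling (a : 'X_{1..N}) (T : RSYT N t) (P : pred nat) :
  #|[pred kl : 'I_N * 'I_N | in_diagram t kl && P (filling a T kl)]| =
  #|[pred m : 'I_N | P (mplus a m)]|.
Proof.
rewrite -(card_imset _ (@rsyt_inj T)); apply: eq_card => kl; rewrite !inE.
apply/andP/imsetP => [[ik pk] | [m hm ->]].
  have [m em] := rsyt_surj T ik; exists m => //; by rewrite inE -(filling_at a T m) em.
by rewrite rsyt_in filling_at; rewrite inE in hm.
Qed.

Lemma card_le_ord (k : 'I_N) : #|[pred m : 'I_N | (m <= k)%N]| = k.+1.
Proof. by rewrite -(card_lt (ltn_ord k)); apply: eq_card. Qed.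

Lemma count_part (a : 'X_{1..N}) (k : 'I_N) v : is_partition_mnm a ->
  (#|[pred m : 'I_N | (v < a m)%N]| <= k)%N ->
  (k < #|[pred m : 'I_N | (v < a m)%N]| + #|[pred m : 'I_N | a m == v]|)%N -> a k = v.
Proof.
move=> hp h1 h2.
case: (ltngtP v (a k)) => [lt|lt|//].
- have : (#|[pred m : 'I_N | (m <= k)%N]| <= #|[pred m : 'I_N | (v < a m)%N]|)%N.
    apply: subset_leq_card; apply/subsetP => m; rewrite !inE => mk.
    exact: leq_trans lt (hp _ _ mk).
  rewrite card_le_ord; lia.
- have : (#|[pred m : 'I_N | (v < a m)%N]| + #|[pred m : 'I_N | a m == v]| <= #|[pred m : 'I_N | (m < k)%N]|)%N.
    rewrite -cardUI.
    have -> : #|[predI [pred m : 'I_N | (v < a m)%N] & [pred m : 'I_N | a m == v]]| = 0%N.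
      by apply: eq_card0 => m; rewrite !inE; apply/negP => /andP [l /eqP e]; rewrite e ltnn in l.
    rewrite addn0; apply: subset_leq_card; apply/subsetP => m; rewrite !inE.
    case: (ltnP m k) => // km; have := hp _ _ km => hmk.
    case/orP => [vm|/eqP e]; [lia | rewrite e in hmk; lia].
  rewrite (card_lt (ltnW (ltn_ord k))); lia.
Qed.

Lemma sink_filling (lam : 'X_{1..N}) (T TS : RSYT N t) :
  is_partition_mnm lam -> is_sink lam T TS -> filling lam TS = filling lam T.
Proof.
move=> hp hs; apply/ffunP => ij.
case: (boolP (in_diagram t ij)) => hin; last by rewrite !filling_out.
have [k ek] := rsyt_surj TS hin; have [m em] := rsyt_surj T hin.
have Fij : filling lam T ij = lam m by rewrite -em filling_at mplus_part.
rewrite -[in LHS]ek filling_at mplus_part // Fij.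
have := hs k; rewrite /= ek Fij.
rewrite (count_filling lam T (fun x => lam m < x)%N).
set B := #|[pred kl : 'I_N * 'I_N | in_diagram t kl && _]|.
have B1 : (1 <= B)%N.
  rewrite lt0n; apply/eqP => /card0_eq /(_ ij); rewrite !inE hin Fij eqxx ltnn eqxx leqnn orbT.
  by [].
have BE : (B <= #|[pred m0 : 'I_N | mplus lam m0 == lam m]|)%N.
  rewrite -(count_filling lam T (fun x => x == lam m)).
  by apply: subset_leq_card; apply/subsetP => kl; rewrite !inE => /and3P [-> -> _].
rewrite !mplus_part // in BE * => hk.
apply: (count_part (k := k) (v := lam m)) => //; lia.
Qed.
End Tab.
Lemma small_prod (C : numClosedFieldType) (k : C) (h : nat) (d : int) :
  k \is Num.real -> - (h%:R^-1) < k < h%:R^-1 -> (`|d| < h%:Z) -> `|k * d%:~R| < 1.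
Proof.
move=> kr kh dh.
have h0 : (0 < h)%N by move: dh; have := normr_ge0 d; lia.
have hC : (0 : C) < h%:R by rewrite ltr0n.
have kn : `|k| < h%:R^-1 by rewrite real_ltr_norml.
rewrite normrM -intr_norm.
have dC : (`|d|%:~R : C) <= h%:R.
  rewrite -[h%:R]/((h%:Z)%:~R) ler_int; exact: ltW.
apply: (le_lt_trans (y := `|k| * h%:R)).
  by apply: ler_wpM2l => //.
by rewrite -[X in _ < X](mulVf (lt0r_neq0 hC)) ltr_pM2r.
Qed.

Section Main.
Context (C : numClosedFieldType) (N : nat) (t : seq nat) (ht : admissible_shape N t).
Context (kappa : C) (kr : kappa \is Num.real)
  (krange : - ((hook_tau t)%:R)^-1 < kappa < ((hook_tau t)%:R)^-1).
Context (rho : 'S_N -> RSYT N t -> RSYT N t -> C) (hrho : is_young_rep rho).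
Context (zeta : 'X_{1..N} -> RSYT N t -> VP C N t) (hz : is_nsJack rho kappa zeta).
Context (H : VP C N t -> VP C N t -> C) (hH : is_torus_form rho kappa H).

Definition mu (a : 'X_{1..N}) (T : RSYT N t) (i : 'I_N) : C :=
  (a i)%:R + 1 + kappa * (content T (rperm a i))%:~R.

Lemma ortho_pairs a1 a2 T1 T2 : (a1, T1) != (a2, T2) -> H (zeta a1 T1) (zeta a2 T2) = 0.
Proof.
move=> ne.
have hpt : is_partition_of N t by case/and3P: ht.
have eig a T i : Uop rho kappa i (zeta a T) = mu a T i *: zeta a T.
  by have [_ _ e] := hz a T; exact: e.
have mureal a T i : mu a T i \is Num.real.
  by rewrite /mu rpredD ?rpredM ?realz // rpredD ?realn ?rpred1.
case: (boolP [exists i, mu a1 T1 i != mu a2 T2 i]) => [/existsP [i hi] | /existsPn hall].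
  exact: (eig_ortho hH hrho.1 kr (mureal a2 T2 i) (eig a1 T1 i) (eig a2 T2 i) hi).
have hmu i : mu a1 T1 i = mu a2 T2 i by apply/eqP; move: (hall i); rewrite negbK.
have ea : a1 = a2.
  apply/mnmP => i; have := hmu i; rewrite /mu => e.
  have e2 : (((a1 i)%:Z - (a2 i)%:Z)%:~R : C) =
     kappa * ((content T2 (rperm a2 i) - content T1 (rperm a1 i))%:~R).
    have e' : ((a1 i)%:Z)%:~R + 1 + kappa * (content T1 (rperm a1 i))%:~R -
      (((a2 i)%:Z)%:~R + 1 + kappa * (content T2 (rperm a2 i))%:~R) = 0 :> C.
      by apply: (etrans _ (subrr ((a2 i)%:R + 1 + kappa * (content T2 (rperm a2 i))%:~R))); congr (_ - _); exact: e.
    rewrite /content in e'; rewrite /content !intrB.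
    apply/eqP; rewrite -subr_eq0 -e' !intrB; apply/eqP.
    ring.
  apply/eqP; apply: contraTT isT => nai.
  have : `|kappa * ((content T2 (rperm a2 i) - content T1 (rperm a1 i))%:~R)| < 1.
    apply: (small_prod (h := hook_tau t)) => //.
    have := content_lt hpt T1 T2 (rperm a1 i) (rperm a2 i).
    have := content_lt hpt T2 T1 (rperm a2 i) (rperm a1 i).
    rewrite ltr_norml; lia.
  rewrite -e2 -intr_norm -[1]/((1%:Z)%:~R) ltr_int.
  by move: nai; lia.
subst a2.
have nT : T1 != T2 by move: ne; rewrite xpair_eqE eqxx.
case: (eqVneq kappa 0) => [k0|kn].
  move: hH hz; rewrite k0 => hH0 hz0.
  exact: (ortho_k0 hH0 hz0).
suff : T1 = T2 by move=> e; rewrite e eqxx in nT.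
apply: (content_inj hpt) => k.
have := hmu ((rperm a1)^-1 k)%g; rewrite /mu permKV => /addrI /(mulfI kn).
by move/eqP; rewrite eqr_int => /eqP.
Qed.
End Main.

Theorem mainTheorem11
  (C : numClosedFieldType) (N : nat) (t : seq nat)
  (ht : admissible_shape N t)
  (kappa : C) (kappa_real : kappa \is Num.real)
  (kappa_range : - ((hook_tau t)%:R)^-1 < kappa < ((hook_tau t)%:R)^-1)
  (rho : 'S_N -> RSYT N t -> RSYT N t -> C) (hrho : is_young_rep rho)
  (zeta : 'X_{1..N} -> RSYT N t -> VP C N t) (hzeta : is_nsJack rho kappa zeta)
  (H : VP C N t -> VP C N t -> C) (hH : is_torus_form rho kappa H)
  (lam lam' : 'X_{1..N}) (T T' TS TS' : RSYT N t) :
  is_partition_mnm lam -> is_partition_mnm lam' ->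
  column_strict t (filling lam T) -> column_strict t (filling lam' T') ->
  filling lam T != filling lam' T' ->
  is_sink lam T TS -> is_sink lam' T' TS' ->
  H (Jpoly kappa zeta lam TS) (Jpoly kappa zeta lam' TS') = 0.
Proof.
move=> plam plam' _ _ nF sk sk'.
have hpt : is_partition_of N t by case/and3P: ht.
have FS := sink_filling hpt plam sk; have FS' := sink_filling hpt plam' sk'.
rewrite /Jpoly (Hsum hH); apply: big1 => b _; rewrite (Hsum hH); apply: big1 => T1 h1.
rewrite (HZ hH) (Hsumr hH) big1 ?mulr0 // => b' _; rewrite (Hsumr hH) big1 // => T2 h2.
rewrite (HZr hH) (ortho_pairs ht kappa_real kappa_range hrho hzeta hH) ?mulr0 //.
apply/negP; rewrite xpair_eqE => /andP [/eqP e1 /eqP e2]; move: nF.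
by rewrite -FS -FS' -(eqP h1) -(eqP h2) e1 e2 eqxx.
Qed.
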